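(* Let $U_1,\ldots,U_K$ be mutually commuting unitary operators on a Hilbert space $\mathcal{H}_Q$ of finite dimension $D_Q$. If $U_1,\ldots,U_K$ are unambiguously distinguishable, then $K\le D_Q$.
   Context: A finite list of unitary operators $U_1,\ldots,U_K$ on a finite-dimensional Hilbert space $\mathcal{H}_Q$ is called unambiguously distinguishable if there exist a finite-dimensional Hilbert space $\mathcal{H}_A$ (an ancilla) and a unit vector $|\psi\rangle\in\mathcal{H}_Q\otimes\mathcal{H}_A$ such that the $K$ output vectors $(U_j\otimes\mathbb{1}_A)|\psi\rangle$, $j=1,\ldots,K$, are linearly independent (equivalently, some measurement on the output identifies $j$ with zero error probability and with nonzero success probability for every $j$). *)

(* Defs.v *)
From HB Require Import structures.
From mathcomp Require Import all_boot all_order all_algebra.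
From mathcomp Require Export mxtens.
Set Implicit Arguments. Unset Strict Implicit. Unset Printing Implicit Defensive.
Import Order.TTheory GRing.Theory Num.Theory.
Local Open Scope ring_scope.

Definition adjmx (C : numClosedFieldType) m n (A : 'M[C]_(m, n)) : 'M[C]_(n, m) :=
  (map_mx Num.conj A)^T.

Definition unitary_mx (C : numClosedFieldType) n (U : 'M[C]_n) : Prop :=
  U *m adjmx U = 1%:M /\ adjmx U *m U = 1%:M.

Definition lin_indep (C : numClosedFieldType) N K (v : 'I_K -> 'cV[C]_N) : Prop :=
  forall c : 'I_K -> C, \sum_(j < K) c j *: v j = 0 -> forall j, c j = 0.

Definition unit_vec (C : numClosedFieldType) N (psi : 'cV[C]_N) : Prop :=
  adjmx psi *m psi = 1%:M.

(* Unambiguous distinguishability of U_1..U_K on H_Q = C^DQ: there is a finite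
   dimensional ancilla H_A = C^DA and a unit vector psi in H_Q (x) H_A = C^(DQ*DA)
   such that the vectors (U_j (x) 1_A) psi are linearly independent. *)
Definition unamb_dist (C : numClosedFieldType) DQ K (U : 'I_K -> 'M[C]_DQ) : Prop :=
  exists (DA : nat) (psi : 'cV[C]_(DQ * DA)),
    unit_vec psi /\ lin_indep (fun j => (U j *t (1%:M : 'M[C]_DA)) *m psi).

(* Main.v *)
Require Import Defs.
From mathcomp Require Import all_boot all_order all_algebra zify ring.
Set Implicit Arguments. Unset Strict Implicit. Unset Printing Implicit Defensive.
Import Order.TTheory GRing.Theory Num.Theory.
Local Open Scope ring_scope.
Section S.
Variable C : numClosedFieldType.
Implicit Types (a : C).
Lemma adjmxM m n p (A : 'M[C]_(m,n)) (B : 'M[C]_(n,p)) : adjmx (A *m B) = adjmx B *m adjmx A.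
Proof. by rewrite /adjmx map_mxM trmx_mul. Qed.
Lemma adjmxK m n (A : 'M[C]_(m,n)) : adjmx (adjmx A) = A.
Proof. by apply/matrixP => i j; rewrite /adjmx !mxE conjCK. Qed.
Lemma adjmxB m n (A B : 'M[C]_(m,n)) : adjmx (A - B) = adjmx A - adjmx B.
Proof. by apply/matrixP => i j; rewrite /adjmx !mxE rmorphB. Qed.
Lemma adjmx_scalar n a : adjmx (a%:M : 'M[C]_n) = (a^*)%:M.
Proof. by apply/matrixP => i j; rewrite /adjmx !mxE rmorphMn eq_sym. Qed.
Lemma adjmx_eq0 m n (N : 'M[C]_(m,n)) : adjmx N *m N = 0 -> N = 0.
Proof.
move=> H; apply/matrixP => i j.
have := congr1 (fun M : 'M[C]_n => M j j) H; rewrite !mxE.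
under eq_bigr do rewrite /adjmx !mxE.
move=> /eqP; rewrite psumr_eq0; last by move=> k _; rewrite mulrC mul_conjC_ge0.
move=> /allP /(_ i (mem_index_enum _)) /implyP /(_ isT).
by rewrite mulrC mul_conjC_eq0 => /eqP ->.
Qed.
Lemma normal_sq m n (B : 'M[C]_n) (M : 'M[C]_(n,m)) :
  B *m adjmx B = adjmx B *m B -> B *m (B *m M) = 0 -> B *m M = 0.
Proof.
move=> nB H.
have h1 : adjmx B *m (B *m M) = 0.
  apply: adjmx_eq0; rewrite !adjmxM adjmxK -!mulmxA.
  rewrite (mulmxA B (adjmx B)) nB -!mulmxA H !mulmx0 //.
by apply: adjmx_eq0; rewrite adjmxM -mulmxA h1 mulmx0.
Qed.
Lemma normal_shift n (A : 'M[C]_n) a : A *m adjmx A = adjmx A *m A ->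
  let B := A - a%:M in B *m adjmx B = adjmx B *m B.
Proof.
move=> nA B; rewrite /B adjmxB adjmx_scalar.
rewrite !mulmxBl !mulmxBr nA !mul_scalar_mx !mul_mx_scalar.
rewrite !scale_scalar_mx mulrC !opprB !addrA addrAC [RHS]addrAC; congr (_ + _); exact: addrAC. Qed.

Definition normalmx n (A : 'M[C]_n) := A *m adjmx A = adjmx A *m A.
Lemma poly_step n (A : 'M[C]_n.+1) a s : normalmx A ->
  horner_mx A (('X - a%:P) * (('X - a%:P) * s)) = 0 ->
  horner_mx A (('X - a%:P) * s) = 0.
Proof.
move=> nA; rewrite !rmorphM /= rmorphB /= horner_mx_X horner_mx_C -!mulmxE.
exact: normal_sq (normal_shift a nA).
Qed.
Lemma dedup n (A : 'M[C]_n.+1) : normalmx A -> forall k (rs : seq C) s,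
  (size rs < k)%N -> horner_mx A (s * \prod_(z <- rs) ('X - z%:P)) = 0 ->
  exists2 rs', uniq rs' & {subset rs' <= rs} /\
     horner_mx A (s * \prod_(z <- rs') ('X - z%:P)) = 0.
Proof.
move=> nA; elim=> // k IH [|z t] s Hs H.
  by exists [::].
rewrite big_cons in H.
case: (boolP (z \in t)) => zt.
  rewrite (perm_big _ (perm_to_rem zt)) big_cons /= in H.
  have H2 : horner_mx A (('X - z%:P) * (('X - z%:P) * (s * \prod_(i <- rem z t) ('X - i%:P)))) = 0.
    by rewrite -H; congr (horner_mx A _); ring.
  have H3 : horner_mx A (s * \prod_(i <- z :: rem z t) ('X - i%:P)) = 0.
    by rewrite big_cons -(poly_step nA H2); congr (horner_mx A _); ring.
  have Hsz : (size (z :: rem z t) < k)%N.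
    have : (0 < size t)%N by case: (t) zt.
    by move: Hs; rewrite /= size_rem // => Hs Ht; rewrite prednK.
  have [rs' u [sub h]] := IH _ s Hsz H3.
  by exists rs' => //; split => // x /sub; rewrite !inE => /orP [->|/mem_rem ->] //; rewrite orbT.
have H' : horner_mx A (s * ('X - z%:P) * \prod_(i <- t) ('X - i%:P)) = 0.
  by rewrite -mulrA.
have [rs' u [sub h]] := IH t (s * ('X - z%:P)) Hs H'.
exists (z :: rs').
  by rewrite /= u andbT; apply/negP => /sub; rewrite (negbTE zt).
split; first by move=> x; rewrite !inE => /orP [->//|/sub ->]; rewrite orbT.
by rewrite big_cons mulrA.
Qed.
Lemma normal_diag n (A : 'M[C]_n.+1) : normalmx A -> diagonalizable A.
Proof.
move=> nA; apply/diagonalizableP.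
have [r Hr] := closed_field_poly_normal (mxminpoly A).
have H0 : horner_mx A (1 * \prod_(z <- r) ('X - z%:P)) = 0.
  by rewrite mul1r -(mx_root_minpoly A) [in RHS]Hr (monicP (mxminpoly_monic A)) scale1r.
have [rs' u [_ h]] := dedup nA (ltnSn (size r)) H0.
by exists rs' => //; apply: mxminpoly_min; rewrite -[X in horner_mx A X]mul1r.
Qed.
Lemma li_rows_le K n (d : 'I_K -> 'rV[C]_n) :
  (forall c : 'I_K -> C, \sum_j c j *: d j = 0 -> forall j, c j = 0) -> (K <= n)%N.
Proof.
move=> li; pose M := \matrix_(j < K) d j.
have rf : row_free M.
  rewrite -kermx_eq0; apply/eqP/matrixP => i j; rewrite [RHS]mxE.
  have h : row i (kermx M) *m M = 0 by rewrite -row_mul mulmx_ker row0.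
  rewrite mulmx_sum_row in h.
  have := li (fun j => row i (kermx M) 0 j) _ j; rewrite [in X in X -> _]mxE; apply.
  by rewrite -[RHS]h; apply: eq_bigr => k _; rewrite rowK.
by move: rf; rewrite /row_free => /eqP <-; apply: rank_leq_col.
Qed.
Lemma tens_sumZl K m n p q (c : 'I_K -> C) (A : 'I_K -> 'M[C]_(m,n)) (B : 'M[C]_(p,q)) :
  (\sum_j c j *: A j) *t B = \sum_j c j *: (A j *t B).
Proof.
apply/matrixP => i j; rewrite !mxE !summxE mulr_suml; apply: eq_bigr => k _.
by rewrite !mxE mulrA.
Qed.
End S.

Theorem corollary1 (C : numClosedFieldType) (DQ K : nat) (U : 'I_K -> 'M[C]_DQ) :
  (forall j, unitary_mx (U j)) ->
  (forall i j, U i *m U j = U j *m U i) ->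
  unamb_dist U ->
  (K <= DQ)%N.
Proof.
move=> Hu Hc [DA [psi [_ li]]].
have liU : forall c : 'I_K -> C, \sum_j c j *: U j = 0 -> forall j, c j = 0.
  move=> c hc; apply: li.
  have -> : \sum_j c j *: ((U j *t (1%:M : 'M[C]_DA)) *m psi)
      = ((\sum_j c j *: U j) *t (1%:M : 'M[C]_DA)) *m psi.
    by rewrite tens_sumZl mulmx_suml; apply: eq_bigr => j _; rewrite scalemxAl.
  by rewrite hc tens0mx mul0mx.
clear li psi; case: DQ U Hu Hc liU => [|n] U Hu Hc liU.
  case: K U Hu Hc liU => // K U Hu Hc liU.
  have h0 : \sum_j (fun _ : 'I_K.+1 => (1 : C)) j *: U j = 0.
    by apply/matrixP => -[].
  by have /eqP := liU _ h0 ord0; rewrite oner_eq0.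
have nU j : normalmx (U j) by rewrite /normalmx; case: (Hu j) => -> ->.
have : codiagonalizable (map U (enum 'I_K)).
  apply/codiagonalizableP; split.
    by move=> f g /mapP[i _ ->] /mapP[j _ ->]; exact: Hc.
  by move=> f /mapP[i _ ->]; exact: normal_diag.
case=> P Punit /allP Hd.
have D j : is_diag_mx (P *m U j *m invmx P).
  by have := Hd (U j) (map_f _ (mem_enum _ j)); rewrite /= /similar_to conjumx.
apply: (@li_rows_le _ K n.+1 (fun j => \row_i (P *m U j *m invmx P) i i)).
move=> c hc; apply: liU.
have hD : \sum_j c j *: (P *m U j *m invmx P) = 0.
  apply/matrixP => a b; rewrite summxE [RHS]mxE; case: (eqVneq a b) => [<-|ab].
    have := congr1 (fun r : 'rV[C]_n.+1 => r 0 a) hc; rewrite summxE [RHS]mxE.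
    by move=> h; rewrite -[RHS]h; apply: eq_bigr => j _; rewrite !mxE.
  by apply: big1 => j _; rewrite mxE (is_diag_mxP (D j)) ?mulr0.
have -> : \sum_j c j *: U j = invmx P *m (\sum_j c j *: (P *m U j *m invmx P)) *m P.
  rewrite mulmx_sumr mulmx_suml; apply: eq_bigr => j _.
  by rewrite -scalemxAr -scalemxAl !mulmxA mulVmx // mul1mx -mulmxA mulVmx // mulmx1.
by rewrite hD mulmx0 mul0mx.
Qed.
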